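(* Let $(\mathbf k((G)),l)$ be a series field with prelogarithmic section, with associated EL-series field $(\mathbf k((G))^{EL},\mathrm{Log},\mathrm{Exp})$. Let $U\subseteq H\subseteq G$ be subgroups such that $U$ is a proper convex subgroup of $H$ ($U=\{1\}$ allowed). Suppose $(\dagger)$: $\mathrm{Log}(h)<|f|$ for all $h\in H$ and all $f\in\mathbf k((H^{>U}))$ with $f\ne0$. Let $H^{\#,U}=H\cdot\mathrm{Exp}(\mathbf k((H^{>U})))\subseteq G^\#$. Then $H$ is a proper convex subgroup of $H^{\#,U}$, $H^{\#,U}$ is the anti-lexicographic product of $H$ and $\mathrm{Exp}(\mathbf k((H^{>U})))$, and $\mathrm{Log}(h')<|f|$ for all $h'\in H^{\#,U}$ and all nonzero $f\in\mathbf k(((H^{\#,U})^{>H}))$.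
   Context: Let $\mathbf k$ be an ordered field and $(G,\cdot,<)$ a totally ordered abelian group (written multiplicatively). $\mathbf k((G))$ denotes the field of generalized power series $\alpha=\sum_{g\in G}\alpha(g)\,g$ ($\alpha(g)\in\mathbf k$) with anti-well-ordered support, usual operations, canonical valuation $v(\alpha)=\max\operatorname{supp}\alpha$ and ordering $\alpha>0$ iff $\alpha(v(\alpha))>0$; $\mathbf k$, $G$ are identified with subsets of $\mathbf k((G))$. For $S\subseteq G$, $\mathbf k((S))=\{\alpha:\operatorname{supp}\alpha\subseteq S\}$. For a subgroup $H$ and $A\subseteq G$, $H^{>A}=\{h\in H:h>a\ \forall a\in A\}$, $H^{>1}=\{h\in H:h>1\}$. Every $\alpha>0$ is uniquely $\alpha=g\,a(1+\varepsilon)$ with $g=v(\alpha)$, $a\in\mathbf k^{>0}$, $\varepsilon\in\mathbf k((G^{<1}))$. A prelogarithmic section is an order-preserving group embedding $l:(G,\cdot)\to(\mathbf k((G^{>1})),+)$. Fix an order-preserving group isomorphism $\log:(\mathbf k^{>0},\cdot)\to(\mathbf k,+)$. The prelogarithm of $l$ is $L(g\,a(1+\varepsilon))=l(g)+\log a+\sum_{i\ge1}(-1)^{i-1}\varepsilon^i/i$. Exponential extension: $G^\#$ is the ordered abelian group of formal symbols $e(\alpha)$, $\alpha\in\mathbf k((G^{>1}))$, with $e(\alpha)e(\beta)=e(\alpha+\beta)$, $e(\alpha)<e(\beta)\iff\alpha<\beta$, and $e(l(g))$ identified with $g\in G$; $l^\#(e(\alpha))=\alpha$ is a prelogarithmic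 section of $\mathbf k((G^\#))$ extending $l$. Iterating: $G^{\#n}$, $l^{\#n}$, prelogarithms $L^{\#n}$. The EL-series field is $\mathbf k((G))^{EL}=\bigcup_n\mathbf k((G^{\#n}))$ with $\mathrm{Log}=\bigcup_nL^{\#n}$, an order preserving isomorphism from the positive elements onto $(\mathbf k((G))^{EL},+)$; $\mathrm{Exp}=\mathrm{Log}^{-1}$. Note $\mathrm{Log}(g)=l(g)$ for $g\in G$, and $\mathrm{Exp}(f)\in G^\#$ for $f\in\mathbf k((G^{>1}))$. ''Anti-lexicographic product'' of subgroups $A,B$ of an ordered group: the group is $A\cdot B$, the product is direct, and $A$ is convex in it. *)

(* Defs.v *)
From HB Require Import structures.
From mathcomp Require Import all_boot all_order all_algebra.
From Stdlib Require Import Classical ClassicalEpsilon.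
Set Implicit Arguments. Unset Strict Implicit. Unset Printing Implicit Defensive.
Import Order.TTheory GRing.Theory Num.Theory.
Local Open Scope ring_scope.

Record oagroup := OAGroup {
  oa_car :> Type;
  oa_mul : oa_car -> oa_car -> oa_car;
  oa_one : oa_car;
  oa_inv : oa_car -> oa_car;
  oa_lt  : oa_car -> oa_car -> Prop;
  oa_mulA : forall x y z, oa_mul x (oa_mul y z) = oa_mul (oa_mul x y) z;
  oa_mulC : forall x y, oa_mul x y = oa_mul y x;
  oa_mul1 : forall x, oa_mul oa_one x = x;
  oa_mulV : forall x, oa_mul (oa_inv x) x = oa_one;
  oa_lt_irr : forall x, ~ oa_lt x x;
  oa_lt_trans : forall x y z, oa_lt x y -> oa_lt y z -> oa_lt x z;
  oa_lt_total : forall x y, oa_lt x y \/ x = y \/ oa_lt y x;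
  oa_lt_mul : forall x y z, oa_lt x y -> oa_lt (oa_mul x z) (oa_mul y z)
}.

Definition is_subgroup (G : oagroup) (H : G -> Prop) : Prop :=
  H (oa_one G) /\ forall x y, H x -> H y -> H (oa_mul x (oa_inv y)).

Definition le_of {T : Type} (lt : T -> T -> Prop) (x y : T) : Prop :=
  lt x y \/ x = y.

Definition convex_in {T : Type} (lt : T -> T -> Prop) (A B : T -> Prop) : Prop :=
  forall a1 a2 x, A a1 -> A a2 -> B x -> le_of lt a1 x -> le_of lt x a2 -> A x.

Definition above {T : Type} (lt : T -> T -> Prop) (B A : T -> Prop) (x : T) : Prop :=
  B x /\ forall a, A a -> lt a x.

Definition anti_wo {T : Type} (lt : T -> T -> Prop) (S : T -> Prop) : Prop :=
  forall A : T -> Prop, (forall x, A x -> S x) -> (exists x, A x) ->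
    exists m, A m /\ forall x, A x -> ~ lt m x.

(* Generalized power series k((T)): functions T -> k with
   anti-well-ordered support. *)
Section Series.
Variables (k : realFieldType) (T : Type) (lt : T -> T -> Prop).

Definition supp (a : T -> k) (x : T) : Prop := a x != 0.

Definition is_series (a : T -> k) : Prop := anti_wo lt (supp a).

Definition series_on (S : T -> Prop) (a : T -> k) : Prop :=
  is_series a /\ forall x, supp a x -> S x.

Definition szero : T -> k := fun _ => 0.
Definition sadd (a b : T -> k) : T -> k := fun x => a x + b x.
Definition sopp (a : T -> k) : T -> k := fun x => - a x.

Definition spos (a : T -> k) : Prop :=
  exists g, 0 < a g /\ forall g', lt g g' -> a g' = 0.

Definition slt (a b : T -> k) : Prop := spos (fun x => b x - a x).

Definition sabs (a : T -> k) : T -> k :=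
  if excluded_middle_informative (spos a) then a else sopp a.
End Series.
Arguments szero {k T}.

Section Exten.
Variables (k : realFieldType) (G : oagroup).

Definition Ggt1 (g : G) : Prop := oa_lt (oa_one G) g.

Definition prelog_section (l : G -> (G -> k)) : Prop :=
  (forall g, series_on (@oa_lt G) Ggt1 (l g)) /\
  (forall g h, l (oa_mul g h) = sadd (l g) (l h)) /\
  (forall g h, oa_lt g h -> slt (@oa_lt G) (l g) (l h)).

(* Carrier of G^#: the symbol e(alpha) is represented by alpha : G -> k
   (only alpha in k((G^{>1})) are elements of G^#, see [Gsharp]).
   Product in G^# is addition of exponents, the order is that of exponents,
   the unit is e(0), and g in G is identified with e(l g). *)
Definition Gsharp_car : Type := G -> k.
Definition Gsharp (a : Gsharp_car) : Prop := series_on (@oa_lt G) Ggt1 a.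
Definition Gsharp_lt : Gsharp_car -> Gsharp_car -> Prop := slt (@oa_lt G).

(* The embedding k((G)) -> k((G^#)) induced by g |-> e(l g) :
   sum_g a(g) g |-> sum_g a(g) e(l g). *)
Definition embed (l : G -> (G -> k)) (a : G -> k) : Gsharp_car -> k :=
  fun b => match excluded_middle_informative (exists g, l g = b) with
           | left H => a (proj1_sig (constructive_indefinite_description _ H))
           | right _ => 0
           end.

(* Log on G^# is l^#(e(alpha)) = alpha, viewed in k((G^#)) *)
Definition LogSharp (l : G -> (G -> k)) (a : Gsharp_car) : Gsharp_car -> k :=
  embed l a.
End Exten.

(* Main.v *)
Require Import Defs.
From mathcomp Require Import all_boot all_order all_algebra.
From Stdlib Require Import Classical ClassicalEpsilon FunctionalExtensionality.
From mathcomp Require Import ring lra.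
Import Order.TTheory GRing.Theory Num.Theory.
Local Open Scope ring_scope.
Set Implicit Arguments. Unset Strict Implicit.


Section Gen.
Variables (k : realFieldType) (T : Type) (lt : T -> T -> Prop).

Lemma spos_ext (a b : T -> k) : (forall x, a x = b x) -> spos lt a -> spos lt b.
Proof. move=> e [g [h1 h2]]; exists g; split; [by rewrite -e | by move=> g' /h2; rewrite e]. Qed.

Lemma zero_not_spos (d : T -> k) : (forall x, d x = 0) -> ~ spos lt d.
Proof. move=> e [g [h _]]; by rewrite e ltxx in h. Qed.

Lemma top_exists (f : T -> k) : is_series lt f -> f <> szero ->
  exists b0, f b0 != 0 /\ forall x, lt b0 x -> f x = 0.
Proof.
move=> hs hne.
have [x hx] : exists x, f x != 0.
  apply: NNPP => hn; apply: hne; apply: functional_extensionality => x.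
  case: (eqVneq (f x) 0) => // hx; exfalso; apply: hn; by exists x.
have [m [hm hmax]] := hs (supp f) (fun _ h => h) (ex_intro _ x hx).
exists m; split => // y hy; case: (eqVneq (f y) 0) => // hy'; exfalso; exact: (hmax y hy' hy).
Qed.

Lemma top_abs (f : T -> k) : is_series lt f -> f <> szero ->
  exists b0, f b0 != 0 /\ 0 < sabs lt f b0 /\ forall x, lt b0 x -> sabs lt f x = 0.
Proof.
move=> hs hne; rewrite /sabs; case: excluded_middle_informative => hp.
- case: hp => g [hg1 hg2]; exists g; split; [by rewrite gt_eqF | by split].
- have [b0 [hb0 hv]] := top_exists hs hne.
  exists b0; split => //; split; last by move=> x /hv e; rewrite /sopp /= e oppr0.
  rewrite /sopp oppr_gt0; case: (ltgtP (f b0) 0) => h //.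
  + exfalso; apply: hp; by exists b0.
  + by rewrite h eqxx in hb0.
Qed.

Lemma series0 (S : T -> Prop) : series_on lt S (@szero k T).
Proof.
split; last by move=> x; rewrite /supp /szero eqxx.
move=> A hA [x hx]; by move: (hA x hx); rewrite /supp /szero eqxx.
Qed.

Definition delta (c : k) (u : T) : T -> k :=
  fun x => if excluded_middle_informative (x = u) then c else 0.

Lemma delta_series (S : T -> Prop) c u : (forall x, ~ lt x x) -> S u ->
  series_on lt S (delta c u).
Proof.
move=> irr Su; have hs : forall x, supp (delta c u) x -> x = u.
  move=> x; rewrite /supp /delta; destruct (excluded_middle_informative (x = u)) => //; by rewrite eqxx.
split; last by move=> x /hs ->.
move=> A hA [x hx]; exists x; split => // y hy.
by rewrite (hs _ (hA _ hx)) (hs _ (hA _ hy)); apply: irr.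
Qed.

Lemma delta_ne0 c u : c != 0 -> delta c u <> szero.
Proof.
move=> hc e; have := f_equal (fun f => f u) e; rewrite /delta /szero.
destruct (excluded_middle_informative (u = u)) => //= ec; by rewrite ec eqxx in hc.
Qed.

Lemma delta_spos c u : (forall x, ~ lt x x) -> 0 < c -> spos lt (delta c u).
Proof.
move=> irr hc; exists u; rewrite /delta; split.
  by destruct (excluded_middle_informative (u = u)).
move=> g' hg; destruct (excluded_middle_informative (g' = u)) as [e|e] => //; subst; by case: (irr _ hg).
Qed.

Hypothesis tot : forall x y, lt x y \/ x = y \/ lt y x.
Hypothesis tr : forall x y z, lt x y -> lt y z -> lt x z.

Lemma not_spos_neg (d : T -> k) g : d g < 0 -> (forall g', lt g g' -> d g' = 0) -> ~ spos lt d.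
Proof.
move=> hg hv [g' [hp hv']]; case: (tot g g') => [/hv|[e|/hv']].
- by move=> e; rewrite e ltxx in hp.
- rewrite e in hg; by move: (lt_trans hg hp); rewrite ltxx.
- move=> e; by rewrite e ltxx in hg.
Qed.

Lemma spos_opp_not (d : T -> k) : spos lt d -> ~ spos lt (fun x => - d x).
Proof.
move=> [g [hp hv]]; apply: (not_spos_neg (g := g)); first by rewrite oppr_lt0.
by move=> g' /hv ->; rewrite oppr0.
Qed.

Lemma spos_add (a b : T -> k) : spos lt a -> spos lt b -> spos lt (fun x => a x + b x).
Proof.
move=> [g1 [p1 v1]] [g2 [p2 v2]].
case: (tot g1 g2) => [h|[e|h]].
- exists g2; split; first by rewrite (v1 _ h) add0r.
  move=> g' h'; rewrite (v2 _ h') (v1 g') ?addr0 //; exact: tr h h'.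
- subst; exists g2; split; first exact: addr_gt0.
  move=> g' h'; by rewrite v1 // v2 // addr0.
- exists g1; split; first by rewrite (v2 _ h) addr0.
  move=> g' h'; rewrite (v1 _ h') (v2 g') ?addr0 //; exact: tr h h'.
Qed.

Lemma nlt_le x y : ~ lt x y -> le_of lt y x.
Proof. move=> n; case: (tot x y) => [//|[->|h]]; [by right | by left]. Qed.
End Gen.

Lemma sabs_pos (k : realFieldType) (T : Type) (lt : T -> T -> Prop) (f : T -> k) :
  spos lt f -> sabs lt f = f.
Proof. by rewrite /sabs; case: excluded_middle_informative. Qed.
Lemma sabs_neg (k : realFieldType) (T : Type) (lt : T -> T -> Prop) (f : T -> k) :
  ~ spos lt f -> sabs lt f = sopp f.
Proof. by rewrite /sabs; case: excluded_middle_informative. Qed.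


Section Grp.
Variable G : oagroup.
Lemma mulg1' (x : G) : oa_mul x (oa_one G) = x.
Proof. by rewrite oa_mulC oa_mul1. Qed.
Lemma mulgV' (x : G) : oa_mul x (oa_inv x) = oa_one G.
Proof. by rewrite oa_mulC oa_mulV. Qed.
Lemma sub_inv (H : G -> Prop) x : is_subgroup H -> H x -> H (oa_inv x).
Proof. by move=> [H1 Hm] Hx; have := Hm _ _ H1 Hx; rewrite oa_mul1. Qed.
Lemma lt_inv (a h : G) : oa_lt h (oa_inv a) -> oa_lt a (oa_inv h).
Proof.
move=> hl; have := oa_lt_mul (oa_mul a (oa_inv h)) hl.
have -> : oa_mul h (oa_mul a (oa_inv h)) = a.
  by rewrite oa_mulA (oa_mulC h a) -oa_mulA mulgV' mulg1'.
by rewrite oa_mulA oa_mulV oa_mul1.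
Qed.

Variables (k : realFieldType) (l : G -> (G -> k)) (hl : prelog_section l).
Lemma l1 x : l (oa_one G) x = 0.
Proof.
have := f_equal (fun f => f x) (proj1 (proj2 hl) (oa_one G) (oa_one G)).
rewrite oa_mul1 /sadd => e.
by apply: (@addrI _ (l (oa_one G) x)); rewrite addr0 -e.
Qed.
Lemma linv g x : l (oa_inv g) x = - l g x.
Proof.
have := f_equal (fun f => f x) (proj1 (proj2 hl) (oa_inv g) g).
rewrite oa_mulV /sadd l1 => e; apply/eqP; by rewrite -addr_eq0 -e.
Qed.
Lemma lmulinv g h x : l (oa_mul g (oa_inv h)) x = l g x - l h x.
Proof. by rewrite (proj1 (proj2 hl)) /sadd linv. Qed.
End Grp.

Unset Implicit Arguments.
Theorem lemma8
  (k : realFieldType)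
  (log : k -> k)
  (hlogM : forall x y : k, 0 < x -> 0 < y -> log (x * y) = log x + log y)
  (hlog_mono : forall x y : k, 0 < x -> x < y -> log x < log y)
  (hlog_surj : forall y, exists2 x : k, 0 < x & log x = y)
  (G : oagroup) (l : G -> (G -> k)) (hl : prelog_section l)
  (U H : G -> Prop)
  (hU : is_subgroup U) (hH : is_subgroup H)
  (hUH : forall u, U u -> H u)
  (hUproper : exists2 h, H h & ~ U h)
  (hUconvex : convex_in (@oa_lt G) U H)
  (hdagger : forall h, H h -> forall f : G -> k,
      series_on (@oa_lt G) (above (@oa_lt G) H U) f -> f <> szero ->
      slt (@oa_lt G) (l h) (sabs (@oa_lt G) f)) :
  let ltS := @Gsharp_lt k G in
  let Hs : @Gsharp_car k G -> Prop := fun b => exists2 h, H h & b = l h in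
  let E : @Gsharp_car k G -> Prop :=
      fun b => series_on (@oa_lt G) (above (@oa_lt G) H U) b in
  let HsU : @Gsharp_car k G -> Prop :=
      fun b => exists h, exists a, [/\ H h, E a & b = sadd (l h) a] in
  ((forall b, Hs b -> HsU b) /\ (exists2 b, HsU b & ~ Hs b) /\
   convex_in ltS Hs HsU) /\
  ((forall b, HsU b <-> exists a, exists c, [/\ Hs a, E c & b = sadd a c]) /\
   (forall b, Hs b -> E b -> b = szero) /\
   convex_in ltS Hs HsU) /\
  (forall h', HsU h' -> forall f : @Gsharp_car k G -> k,
     series_on ltS (above ltS HsU Hs) f -> f <> szero ->
     slt ltS (LogSharp l h') (sabs ltS f)).
Proof.
move=> ltS Hs E HsU.
have totG := @oa_lt_total G; have trG := @oa_lt_trans G; have irrG := @oa_lt_irr G.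
have Hmi : forall x y, H x -> H y -> H (oa_mul x (oa_inv y)) by case: hH.
have Hinv : forall x, H x -> H (oa_inv x) by move=> x; apply: sub_inv.
have H1 : H (oa_one G) by case: hH.
have ltS_irr : forall x, ~ ltS x x.
  by move=> x; apply: zero_not_spos => y; rewrite subrr.
have ltS_trans : forall x y z, ltS x y -> ltS y z -> ltS x z.
  move=> x y z h1 h2; have := spos_add totG trG h2 h1.
  by apply: spos_ext => g; rewrite addrA subrK.
have ltS_asym : forall x y, ltS x y -> ltS y x -> False.
  move=> x y h1 h2; apply: (spos_opp_not totG h1).
  by move: h2; apply: spos_ext => g; rewrite opprB.
have KS : forall h f, H h -> E f -> f <> szero ->
   (spos (@oa_lt G) f -> spos (@oa_lt G) (fun x => l h x + f x)) /\
   (~ spos (@oa_lt G) f -> spos (@oa_lt G) (fun x => - (l h x + f x))).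
  move=> h f Hh Ef fne.
  move: (hdagger _ Hh _ Ef fne) (hdagger _ (Hinv _ Hh) _ Ef fne).
  rewrite /slt => d1 d2; case: (classic (spos (@oa_lt G) f)) => hp;
    [rewrite (sabs_pos hp) in d1 d2 | rewrite (sabs_neg hp) in d1 d2]; split => // _.
  + by move: d2; apply: spos_ext => x; rewrite (linv hl) opprK addrC.
  + by move: d1; apply: spos_ext => x; rewrite /sopp opprD addrC.
have conv : convex_in ltS Hs HsU.
  move=> a1 a2 x [h1 Hh1 ->] [h2 Hh2 ->] [h [f [Hh Ef ->]]] le1 le2.
  case: (classic (f = szero)) => [fz|fz].
    exists h => //; apply: functional_extensionality => y; by rewrite /sadd fz /szero addr0.
  case: (classic (spos (@oa_lt G) f)) => sp.
  - case: le2 => [lt2|e]; last by exists h2.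
    exfalso; have := proj1 (KS _ _ (Hmi _ _ Hh Hh2) Ef fz) sp.
    move=> sp2; apply: (spos_opp_not totG sp2); move: lt2; apply: spos_ext => y.
    rewrite /sadd (lmulinv hl); ring.
  - case: le1 => [lt1|e]; last by exists h1 => //; rewrite e.
    exfalso; have := proj2 (KS _ _ (Hmi _ _ Hh Hh1) Ef fz) sp.
    move=> sp2; apply: (spos_opp_not totG lt1); move: sp2; apply: spos_ext => y.
    rewrite /sadd (lmulinv hl); ring.
have [u Hu] : exists u, above (@oa_lt G) H U u.
  case: hUproper => h0 Hh0 nU.
  case: (classic (forall a, U a -> oa_lt a h0)) => c1; first by exists h0.
  case: (classic (forall a, U a -> oa_lt h0 a)) => c2.
    exists (oa_inv h0); split; first exact: Hinv.
    by move=> a Ua; apply: lt_inv; apply: c2; apply: sub_inv.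
  exfalso; apply: nU.
  have [a1 [Ua1 n1]] : exists a, U a /\ ~ oa_lt a h0.
    apply: NNPP => hn; apply: c1 => a Ua; apply: NNPP => hna; apply: hn; by exists a.
  have [a2 [Ua2 n2]] : exists a, U a /\ ~ oa_lt h0 a.
    apply: NNPP => hn; apply: c2 => a Ua; apply: NNPP => hna; apply: hn; by exists a.
  exact: (hUconvex a2 a1 h0 Ua2 Ua1 Hh0 (nlt_le totG n2) (nlt_le totG n1)).
have Hu' : H u by case: Hu.
have SUPP : forall hh, H hh -> forall g, l hh g != 0 -> oa_lt g u.
  move=> hh Hhh g hg; apply: NNPP => ngu.
  have lne : l hh <> szero by move=> e; rewrite e /szero eqxx in hg.
  have [m [hm vm]] := top_exists (proj1 ((proj1 hl) hh)) lne.
  have um : le_of (@oa_lt G) u m.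
    have nmg : ~ oa_lt m g by move=> /vm e; rewrite e eqxx in hg.
    case: (nlt_le totG nmg) => [gm|<-]; last by have := nlt_le totG ngu.
    case: (nlt_le totG ngu) => [ug|->]; last by left.
    left; exact: trG ug gm.
  have [h2 [Hh2 [p2 v2]]] : exists h2, H h2 /\ 0 < l h2 m /\ forall y, oa_lt m y -> l h2 y = 0.
    case: (ltgtP (l hh m) 0) => c.
    - exists (oa_inv hh); split; first exact: Hinv.
      rewrite (linv hl) oppr_gt0; split => // y /vm e; by rewrite (linv hl) e oppr0.
    - by exists hh.
    - by rewrite c eqxx in hm.
  have [c2 ec2] : exists c2, l h2 m = c2 by exists (l h2 m).
  rewrite ec2 in p2.
  have c2ne : c2 / 2 != 0 by rewrite mulf_neq0 // ?gt_eqF // invr_gt0 ltr0n.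
  have c2pos : 0 < c2 / 2 by rewrite divr_gt0 // ltr0n.
  have Ef : E (delta (c2 / 2) u) by apply: delta_series.
  move: (hdagger _ Hh2 _ Ef (delta_ne0 (u:=u) c2ne)).
  rewrite /slt (sabs_pos (delta_spos u irrG c2pos)).
  apply: (not_spos_neg totG (g := m)).
  - rewrite /delta ec2; case: excluded_middle_informative => /= _; lra.
  - move=> y my; rewrite v2 // subr0 /delta.
    destruct (excluded_middle_informative (y = u)) as [e|e] => //; subst y.
    case: um => [um|eum]; [by case: (irrG _ (trG _ _ _ um my)) | by rewrite eum in my; case: (irrG _ my)].
split; [split; [|split; [|exact: conv]] | split; [split; [|split; [|exact: conv]] |]].
- move=> b [h Hh ->]; exists h, szero; split => //; first exact: series0.
  by apply: functional_extensionality => y; rewrite /sadd /szero addr0.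
- exists (delta 1 u).
    exists (oa_one G), (delta 1 u); split => //; first by apply: delta_series.
    by apply: functional_extensionality => y; rewrite /sadd (l1 hl) add0r.
  move=> [h2 Hh2 e].
  have Eb : E (delta 1 u) by apply: delta_series.
  move: (hdagger _ Hh2 _ Eb (delta_ne0 (u:=u) (oner_neq0 k))).
  rewrite /slt (sabs_pos (delta_spos u irrG ltr01)).
  by rewrite -e; apply: zero_not_spos => y; rewrite subrr.
- move=> b; split.
  + move=> [h [a [Hh Ea ->]]]; exists (l h), a; split => //; by exists h.
  + move=> [a' [c [[h Hh ->] Ec ->]]]; by exists h, c.
- move=> b [h Hh ->] Eb; apply: NNPP => ne.
  move: (hdagger _ Hh _ Eb ne) (hdagger _ (Hinv _ Hh) _ Eb ne); rewrite /slt => d1 d2.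
  case: (classic (spos (@oa_lt G) (l h))) => hp;
    [rewrite (sabs_pos hp) in d1 d2 | rewrite (sabs_neg hp) in d1 d2].
  + by move: d1; apply: zero_not_spos => y; rewrite subrr.
  + by move: d2; apply: zero_not_spos => y; rewrite /sopp (linv hl) subrr.
- move=> h' [h [a [Hh Ea ->]]] f [fs fsupp] fne.
  have [b0 [fb0 [pb0 vb0]]] := top_abs fs fne.
  have [Hb0 ab0] := fsupp b0 fb0.
  have key : forall x, (x = b0 \/ ltS b0 x) -> LogSharp l (sadd (l h) a) x = 0.
    move=> x hx; rewrite /LogSharp /embed.
    destruct (excluded_middle_informative (exists g, l g = x)) as [Hex|] => //.
    case: (constructive_indefinite_description _ Hex) => g eg /=.
    case: (eqVneq (sadd (l h) a g) 0) => // hne; exfalso.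
    have lg : ltS (l g) b0.
      case: (eqVneq (a g) 0) => ag.
      + have lhg : l h g != 0 by move: hne; rewrite /sadd ag addr0.
        apply: (ltS_trans _ (l u)); first exact: (proj2 (proj2 hl)) (SUPP _ Hh _ lhg).
        by apply: ab0; exists u.
      + have [Hg _] := (proj2 Ea) g ag.
        by apply: ab0; exists g.
    rewrite eg in lg; case: hx => [e|lt0]; first by rewrite e in lg; exact: ltS_irr lg.
    exact: ltS_asym lg lt0.
  exists b0; split; first by rewrite key ?subr0 //; left.
  by move=> x hx; rewrite vb0 // key ?subr0 //; right.
Qed.
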